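(* Let $n \ge 2$. (a) If $n\in\{2,3\}$, then $\dim_{1,f}(P_n)=1$; if $n\in\{4,5\}$, then $\dim_{1,f}(P_n)=\frac{8-n}{7-n}$. (b) If $n\ge 6$, then $\dim_{1,f}(P_n)=\frac{n+1}{4}$ if $n\equiv1 \pmod4$, and $\dim_{1,f}(P_n)=\lceil\frac{n}{4}\rceil$ if $n\equiv2$ or $3\pmod4$. (c) If $n\ge 8$ and $n\equiv0 \pmod4$, then $\frac{n}{4}\le\dim_{1,f}(P_n)\le\frac{n+2}{4}$.
   Context: $P_n$ is the path on $n$ vertices. $d(x,y)$ is the distance in $G$. $d_1(x,y)=\min\{d(x,y),2\}$ and $R_1\{x,y\}=\{z\in V(G): d_1(x,z)\neq d_1(y,z)\}$. For a function $g$ on $V(G)$ and $U\subseteq V(G)$, $g(U)=\sum_{s\in U}g(s)$. A function $h:V(G)\to[0,1]$ is a $1$-truncated resolving function of $G$ if $h(R_1\{x,y\})\ge 1$ for all distinct $x,y\in V(G)$; $\dim_{1,f}(G)$ is the minimum of $h(V(G))$ over all such $h$. *)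

(* Defs.v *)
From mathcomp Require Import all_boot all_order all_algebra.
From mathcomp Require Import reals.
Set Implicit Arguments. Unset Strict Implicit. Unset Printing Implicit Defensive.
Import Order.TTheory GRing.Theory Num.Theory.
Local Open Scope ring_scope.

(* The path P_n has vertex set 'I_n (vertices 0,...,n-1), with i ~ i+1.
   Its graph distance is d(i,j) = |i - j|. *)
Definition path_dist (n : nat) (x y : 'I_n) : nat := ((x - y) + (y - x))%N.

Definition path_dist1 (n : nat) (x y : 'I_n) : nat := minn (path_dist x y) 2.

Definition R1 (n : nat) (x y : 'I_n) : {set 'I_n} :=
  [set z | path_dist1 x z != path_dist1 y z].

Definition fsum (R : realType) (n : nat) (g : 'I_n -> R) (U : {set 'I_n}) : R :=
  \sum_(s in U) g s.

Definition truncated_resolving_fun (R : realType) (n : nat) (h : 'I_n -> R) : Prop :=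
  (forall v, 0 <= h v <= 1) /\
  (forall x y : 'I_n, x != y -> 1 <= fsum h (R1 x y)).

Definition is_frac_trunc_dim (R : realType) (n : nat) (d : R) : Prop :=
  (exists h : 'I_n -> R, truncated_resolving_fun h /\ fsum h [set: 'I_n] = d) /\
  (forall h : 'I_n -> R, truncated_resolving_fun h -> d <= fsum h [set: 'I_n]).

(* Main.v *)
Require Import Defs.
From mathcomp Require Import all_boot all_order all_algebra.
From mathcomp Require Import reals.
From mathcomp Require Import zify ring lra.
Import Order.TTheory GRing.Theory Num.Theory.
Local Open Scope ring_scope.
Set Implicit Arguments. Unset Strict Implicit.

Section Basics.
Variable R : realType.
Variable n : nat.
Implicit Types h : 'I_n -> R.

Definition Gs h (m : nat) : R := \sum_(v : 'I_n | (v:nat).+1 == m) h v.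

Lemma inner_sum h (v : 'I_n) (s : seq nat) : uniq s ->
  \sum_(m <- s) (if (v:nat).+1 == m then h v else 0) =
  if (v:nat).+1 \in s then h v else 0.
Proof.
elim: s => [|a s IH] /=; first by rewrite big_nil.
case/andP=> nas us; rewrite big_cons IH // in_cons.
case: eqP => [->|_] /=; last by rewrite add0r.
by rewrite (negPf nas) addr0.
Qed.

Lemma fsum_list h s : uniq s ->
  fsum h [set v : 'I_n | (v:nat).+1 \in s] = \sum_(m <- s) Gs h m.
Proof.
move=> us; rewrite /fsum /Gs.
under [RHS]eq_bigr => m _ do rewrite big_mkcond /=.
rewrite exchange_big /= big_mkcond /=.
apply: eq_bigr => v _; rewrite inE inner_sum //.
Qed.

Lemma fsum_mono h (A B : {set 'I_n}) : (forall v, 0 <= h v) -> A \subset B -> fsum h A <= fsum h B.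
Proof.
move=> h0 sAB; rewrite /fsum [X in _ <= X](bigID (mem A)) /=.
have -> : \sum_(i in B | i \in A) h i = \sum_(i in A) h i.
  by apply: eq_bigl => i; rewrite andb_idl // => /(subsetP sAB).
by rewrite lerDl sumr_ge0.
Qed.

Lemma Gs_ge0 h m : (forall v, 0 <= h v) -> 0 <= Gs h m.
Proof. by move=> h0; apply: sumr_ge0. Qed.

Lemma Gs0 h : Gs h 0 = 0.
Proof. by rewrite /Gs big_pred0. Qed.

Lemma Gs_out h m : (n <= m)%N -> Gs h m.+1 = 0.
Proof. move=> nm; rewrite /Gs big_pred0 // => v; apply/negbTE; have := ltn_ord v; lia. Qed.

Lemma fsumT_iota h N : (n <= N)%N -> fsum h [set: 'I_n] = \sum_(0 <= m < N.+1) Gs h m.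
Proof.
move=> nN; rewrite /index_iota subn0 -fsum_list ?iota_uniq //; congr fsum.
apply/setP => v; rewrite !inE mem_iota; have := ltn_ord v; lia.
Qed.

Lemma fsumT_shift h N : (n <= N)%N -> fsum h [set: 'I_n] = \sum_(0 <= m < N) Gs h m.+1.
Proof. by move=> nN; rewrite (fsumT_iota h nN) big_nat_recl // Gs0 add0r. Qed.

End Basics.

Lemma block_sum (V : nmodType) (F : nat -> V) K :
  \sum_(0 <= m < 4 * K) F m = \sum_(0 <= j < K) (F (4*j)%N + F (4*j).+1 + F (4*j).+2 + F (4*j).+3).
Proof.
elim: K => [|K IH]; first by rewrite !big_geq.
have -> : (4 * K.+1 = (4 * K).+3.+1)%N by lia.
rewrite !big_nat_recr //= ?IH; try lia.
by rewrite !addrA.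
Qed.

Section R1lemmas.
Variable R : realType.
Variable n : nat.
Implicit Types h : 'I_n -> R.

Lemma inR1 (x y v : 'I_n) :
  (v \in R1 x y) = (minn (x - v + (v - x)) 2 != minn (y - v + (v - y)) 2)%N.
Proof. by rewrite inE. Qed.

Lemma R1C (x y : 'I_n) : R1 x y = R1 y x.
Proof. by apply/setP => v; rewrite !inR1 eq_sym. Qed.

Lemma R1_le h (x y : 'I_n) s : (forall v, 0 <= h v) -> uniq s ->
  (forall v : 'I_n, (minn (x - v + (v - x)) 2 != minn (y - v + (v - y)) 2)%N -> ((v:nat).+1 \in s)) ->
  fsum h (R1 x y) <= \sum_(m <- s) Gs h m.
Proof.
move=> h0 us H; rewrite -fsum_list //; apply: fsum_mono => //.
by apply/subsetP => v; rewrite inR1 inE => /H.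
Qed.

Lemma R1_ge4 h (x y : 'I_n) : (forall v, 0 <= h v) -> (x < y)%N ->
  Gs h x + Gs h x.+1 + Gs h y.+1 + Gs h y.+2 <= fsum h (R1 x y).
Proof.
move=> h0 xy.
have us : uniq [:: (x:nat); x.+1; y.+1; y.+2] by rewrite /= !inE; apply/andP; split; lia.
have := fsum_list h us; rewrite !big_cons big_nil addr0 !addrA => <-.
apply: fsum_mono => //; apply/subsetP => v; rewrite inE inR1 !inE; lia.
Qed.

Lemma R1_ge5 h (x y : 'I_n) : (forall v, 0 <= h v) -> (x + 3 <= y)%N ->
  Gs h x + Gs h x.+1 + Gs h y.+1 + Gs h y.+2 + Gs h x.+2 <= fsum h (R1 x y).
Proof.
move=> h0 xy.
have us : uniq [:: (x:nat); x.+1; y.+1; y.+2; x.+2] by rewrite /= !inE; apply/andP; split; lia.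
have := fsum_list h us; rewrite !big_cons big_nil addr0 !addrA => <-.
apply: fsum_mono => //; apply/subsetP => v; rewrite inE inR1 !inE; lia.
Qed.

Definition GF (F : nat -> nat) (m : nat) : nat := if (0 < m)%N && (m <= n)%N then F m.-1 else 0%N.

Lemma Gs_F (F : nat -> nat) (D : nat) m :
  Gs (fun v : 'I_n => (F v)%:R / D%:R : R) m = (GF F m)%:R / D%:R.
Proof.
rewrite /Gs /GF; case: ifP => [/andP[m0 mn]|hm].
  have lt : (m.-1 < n)%N by lia.
  rewrite (big_pred1 (Ordinal lt)) //= => v; rewrite /= -(inj_eq val_inj) /=; lia.
rewrite big_pred0 ?mul0r // => v; apply/negbTE; have := ltn_ord v; move: hm; lia.
Qed.

Lemma primal_ok (F : nat -> nat) (D : nat) : (0 < D)%N ->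
  (forall v, (v < n)%N -> (F v <= D)%N) ->
  (forall x y, (x < y)%N -> (y < n)%N ->
     (D <= GF F x + GF F x.+1 + GF F y.+1 + GF F y.+2 + (if (x + 3 <= y)%N then GF F x.+2 else 0))%N) ->
  truncated_resolving_fun (fun v : 'I_n => (F v)%:R / D%:R : R).
Proof.
move=> D0 FD Hxy; have D0' : (0 : R) < D%:R by rewrite ltr0n.
have h0 : forall v : 'I_n, (0:R) <= (F v)%:R / D%:R by move=> v; rewrite divr_ge0.
split.
  move=> v; rewrite h0 /= ler_pdivrMr // mul1r ler_nat; exact: FD.
have key : forall x y : 'I_n, (x < y)%N -> 1 <= fsum (fun v : 'I_n => (F v)%:R / D%:R : R) (R1 x y).
  move=> x y xy; have := Hxy x y xy (ltn_ord y).
  case: ifP => [x3|_] HD.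
    apply: le_trans (R1_ge5 h0 x3); rewrite !Gs_F -!mulrDl -!natrD ler_pdivlMr // mul1r ler_nat.
    move: HD; lia.
  apply: le_trans (R1_ge4 h0 xy); rewrite !Gs_F -!mulrDl -!natrD ler_pdivlMr // mul1r ler_nat.
  move: HD; lia.
move=> x y; rewrite neq_ltn => /orP[] xy; first exact: key.
by rewrite R1C; apply: key.
Qed.

End R1lemmas.

Lemma fsumT_F (R : realType) n (F : nat -> nat) (D : nat) :
  fsum (fun v : 'I_n => (F v)%:R / D%:R : R) [set: 'I_n] = (\sum_(0 <= v < n) F v)%N%:R / D%:R.
Proof.
rewrite /fsum natr_sum mulr_suml big_mkord.
by apply: eq_bigl => v; rewrite in_setT.
Qed.

Definition FW (n : nat) (v : nat) : nat := if odd v && (v != n.-1) then 0%N else 1%N.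

Lemma FW_left n x : (x < n)%N -> (1 <= GF n (FW n) x + GF n (FW n) x.+1)%N.
Proof. rewrite /GF /FW; repeat case: ifP; lia. Qed.

Lemma FW_right n y : (y < n)%N -> (1 <= GF n (FW n) y.+1 + GF n (FW n) y.+2)%N.
Proof. rewrite /GF /FW; repeat case: ifP; lia. Qed.

Lemma FW_ok (R : realType) n : truncated_resolving_fun (fun v : 'I_n => (FW n v)%:R / 2%:R : R).
Proof.
apply: primal_ok => //.
  by move=> v _; rewrite /FW; case: ifP.
move=> x y xy yn; have := FW_left (ltn_trans xy yn); have := FW_right yn; lia.
Qed.

Lemma FW_blocks n k : (4 * k + 1 <= n)%N ->
  (\sum_(0 <= v < 4 * k) FW n v = 2 * k)%N.
Proof.
move=> kn; rewrite block_sum.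
rewrite (eq_big_nat _ _ (F2 := fun _ => 2%N)).
  by rewrite sum_nat_const_nat; lia.
move=> j /andP[_ jk]; rewrite /FW; repeat case: ifP; lia.
Qed.

Lemma FW_sum1 n k : n = (4 * k + 1)%N -> (\sum_(0 <= v < n) FW n v = 2 * k + 1)%N.
Proof.
move=> ->; rewrite addn1 big_nat_recr //= FW_blocks; last lia.
rewrite /FW; case: ifP; lia.
Qed.

Lemma FW_sum2 n k : n = (4 * k + 2)%N -> (\sum_(0 <= v < n) FW n v = 2 * k + 2)%N.
Proof.
move=> ->; rewrite addn2 !big_nat_recr //= FW_blocks; last lia.
rewrite /FW; repeat case: ifP; lia.
Qed.

Lemma FW_sum3 n k : n = (4 * k + 3)%N -> (\sum_(0 <= v < n) FW n v = 2 * k + 2)%N.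
Proof.
move=> ->; rewrite addn3 !big_nat_recr //= FW_blocks; last lia.
rewrite /FW; repeat case: ifP; lia.
Qed.

Definition F0 (K : nat) (v : nat) : nat := if odd v then (v %/ 4 + 1)%N else (K - v %/ 4)%N.

Lemma F0_left K x : (x < 4 * K)%N ->
  (K + (x %% 4 != 0) <= GF (4 * K) (F0 K) x + GF (4 * K) (F0 K) x.+1)%N.
Proof. rewrite /GF /F0; repeat case: ifP; lia. Qed.

Lemma F0_right K y : (y < 4 * K)%N ->
  (K + (y %% 4 != 3) <= GF (4 * K) (F0 K) y.+1 + GF (4 * K) (F0 K) y.+2)%N.
Proof. rewrite /GF /F0; repeat case: ifP; lia. Qed.

Lemma F0_mid K x : (x + 3 < 4 * K)%N -> (1 <= GF (4 * K) (F0 K) x.+2)%N.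
Proof. rewrite /GF /F0; repeat case: ifP; lia. Qed.

Lemma F0_ok (R : realType) K : truncated_resolving_fun (fun v : 'I_(4 * K) => (F0 K v)%:R / (2 * K + 1)%N%:R : R).
Proof.
apply: primal_ok; first lia.
  by move=> v vn; rewrite /F0; case: ifP; lia.
move=> x y xy yn; have := F0_left (ltn_trans xy yn); have := F0_right yn.
case: ifP => x3; last by lia.
have : (x + 3 < 4 * K)%N by lia.
move=> /F0_mid; lia.
Qed.

Lemma F0_sum K : (\sum_(0 <= v < 4 * K) F0 K v = K * (2 * K + 2))%N.
Proof.
rewrite block_sum.
rewrite (eq_big_nat _ _ (F2 := fun _ => (2 * K + 2)%N)).
  by rewrite sum_nat_const_nat; lia.
move=> j /andP[_ jk]; rewrite /F0; repeat case: ifP; lia.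
Qed.

Lemma feas_ge0 (R : realType) n (h : 'I_n -> R) : truncated_resolving_fun h -> forall v, 0 <= h v.
Proof. by case=> H _ v; case/andP: (H v). Qed.

Lemma pair_bound (R : realType) n (h : 'I_n -> R) (a b : nat) s :
  (a < n)%N -> (b < n)%N -> a != b -> truncated_resolving_fun h -> uniq s ->
  (forall v, (v < n)%N -> (minn (a - v + (v - a)) 2 != minn (b - v + (v - b)) 2)%N -> v.+1 \in s) ->
  1 <= \sum_(m <- s) Gs h m.
Proof.
move=> an bn ab hf us Hs.
have := hf.2 (Ordinal an) (Ordinal bn) ab => H1.
apply: le_trans H1 _; apply: R1_le => //; first exact: feas_ge0.
by move=> v; apply: Hs.
Qed.

Lemma lower23 (R : realType) n k (h : 'I_n -> R) : ((n = 4 * k + 2) \/ (n = 4 * k + 3))%N ->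
  truncated_resolving_fun h -> (k.+1)%:R <= fsum h [set: 'I_n].
Proof.
move=> hn hf.
have nN : (n <= 4 * k + 3)%N by lia.
rewrite (fsumT_iota h nN) (_ : (4 * k + 3).+1 = 4 * k.+1)%N; last lia.
have -> : (k.+1)%:R = \sum_(0 <= j < k.+1) (1:R) by rewrite sumr_const_nat subn0.
rewrite block_sum ler_sum_nat // => j /andP[_ jk].
have := @pair_bound R n h (4 * j) (4 * j).+1 [:: (4 * j)%N; (4*j).+1; (4*j).+2; (4*j).+3].
rewrite !big_cons big_nil addr0 !addrA; apply => //; try (rewrite /= ?inE; lia).
by move=> v vn; rewrite !inE; lia.
Qed.

Lemma lower1 (R : realType) n k (h : 'I_n -> R) : (n = 4 * k + 5)%N ->
  truncated_resolving_fun h -> k%:R + 3 / 2 <= fsum h [set: 'I_n].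
Proof.
move=> hn hf.
have nN : (n <= 4 * k + 5)%N by lia.
rewrite (fsumT_iota h nN) (big_cat_nat _ (n := 4 * k)) //=; last lia.
apply: lerD.
  have -> : k%:R = \sum_(0 <= j < k) (1:R) by rewrite sumr_const_nat subn0.
  rewrite block_sum ler_sum_nat // => j /andP[_ jk].
  have := @pair_bound R n h (4 * j) (4 * j).+1 [:: (4 * j)%N; (4*j).+1; (4*j).+2; (4*j).+3].
  rewrite !big_cons big_nil addr0 !addrA; apply => //; try (rewrite /= ?inE; lia).
  by move=> v vn; rewrite !inE; lia.
rewrite /index_iota (_ : ((4 * k + 5).+1 - 4 * k = 6)%N); last lia.
rewrite /= !big_cons big_nil addr0.
set a := (4 * k)%N.
have H1 : 1 <= Gs h a + Gs h a.+1 + Gs h a.+3 + Gs h a.+4.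
  have := @pair_bound R n h a a.+2 [:: a; a.+1; a.+3; a.+4].
  rewrite !big_cons big_nil addr0 !addrA; apply => //; try (rewrite /= ?inE; lia).
  by move=> v vn; rewrite !inE; lia.
have H2 : 1 <= Gs h a + Gs h a.+1 + Gs h a.+2 + Gs h a.+4 + Gs h a.+4.+1.
  have := @pair_bound R n h a a.+4 [:: a; a.+1; a.+2; a.+4; a.+4.+1].
  rewrite !big_cons big_nil addr0 !addrA; apply => //; try (rewrite /= ?inE; lia).
  by move=> v vn; rewrite !inE; lia.
have H3 : 1 <= Gs h a.+2 + Gs h a.+3 + Gs h a.+4.+1.
  have := @pair_bound R n h a.+2 a.+4 [:: a.+2; a.+3; a.+4.+1].
  rewrite !big_cons big_nil addr0 !addrA; apply => //; try (rewrite /= ?inE; lia).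
  by move=> v vn; rewrite !inE; lia.

lra.
Qed.

Lemma lower0 (R : realType) K (h : 'I_(4 * K) -> R) :
  truncated_resolving_fun h ->
  (K%:R * (2 * K%:R + 2)) / (2 * K%:R + 1) <= fsum h [set: 'I_(4 * K)].
Proof.
move=> hf; set n := (4 * K)%N.
have h0 := feas_ge0 hf.
set D : R := 2 * K%:R + 1.
have D0 : 0 < D by rewrite /D; apply: ltr_wpDl => //; rewrite mulr_ge0 ?ler0n.
set g := Gs h.
pose psi j := (2 * K%:R - 2 * j%:R) * g (4 * j)%N - 2 * j%:R * g (4 * j).+1.
rewrite (fsumT_shift h (leqnn n)) block_sum ler_pdivrMr // mulr_suml.
have step : forall j, (j < K)%N ->
   2 * K%:R + 2 + (psi j.+1 - psi j) <= (g (4 * j).+1 + g (4 * j).+2 + g (4 * j).+3 + g (4 * j).+4) * D.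
  move=> j jK.
  have S1 : 1 <= g (4 * j)%N + g (4 * j).+1 + g (4 * j).+2 + g (4 * j).+3.
    have := @pair_bound R n h (4 * j) (4 * j).+1 [:: (4 * j)%N; (4*j).+1; (4*j).+2; (4*j).+3].
    rewrite !big_cons big_nil addr0 !addrA; apply => //; try (rewrite /n /= ?inE; lia).
    by move=> v vn; rewrite !inE; lia.
  have S2 : 1 <= g (4 * j)%N + g (4 * j).+1 + g (4 * j).+3 + g (4 * j).+4.
    have := @pair_bound R n h (4 * j) (4 * j).+2 [:: (4 * j)%N; (4*j).+1; (4*j).+3; (4*j).+4].
    rewrite !big_cons big_nil addr0 !addrA; apply => //; try (rewrite /n /= ?inE; lia).
    by move=> v vn; rewrite !inE; lia.
  have S3 : 1 <= g (4 * j).+1 + g (4 * j).+2 + g (4 * j).+4 + g (4 * j).+4.+1.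
    have := @pair_bound R n h (4 * j).+1 (4 * j).+3 [:: (4 * j).+1; (4*j).+2; (4*j).+4; (4*j).+4.+1].
    rewrite !big_cons big_nil addr0 !addrA; apply => //; try (rewrite /n /= ?inE; lia).
    by move=> v vn; rewrite !inE; lia.
  have S4 : 1 <= g (4 * j).+2 + g (4 * j).+3 + g (4 * j).+4 + g (4 * j).+4.+1.
    have := @pair_bound R n h (4 * j).+2 (4 * j).+3 [:: (4 * j).+2; (4*j).+3; (4*j).+4; (4*j).+4.+1].
    rewrite !big_cons big_nil addr0 !addrA; apply => //; try (rewrite /n /= ?inE; lia).
    by move=> v vn; rewrite !inE; lia.
  have jK' : j%:R + 1 <= K%:R :> R by rewrite natr1 ler_nat.
  have j0 : 0 <= j%:R :> R by rewrite ler0n.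
  have E4 : (4 * j.+1 = (4 * j).+4)%N by lia.
  pose c : R := (2 * K%:R - 1 - 2 * j%:R).
  have E : (g (4 * j).+1 + g (4 * j).+2 + g (4 * j).+3 + g (4 * j).+4) * D - (2 * K%:R + 2 + (psi j.+1 - psi j)) =
     c * (g (4 * j)%N + g (4 * j).+1 + g (4 * j).+2 + g (4 * j).+3 - 1)
     + (g (4 * j)%N + g (4 * j).+1 + g (4 * j).+3 + g (4 * j).+4 - 1)
     + (g (4 * j).+1 + g (4 * j).+2 + g (4 * j).+4 + g (4 * j).+4.+1 - 1)
     + (2 * j%:R + 1) * (g (4 * j).+2 + g (4 * j).+3 + g (4 * j).+4 + g (4 * j).+4.+1 - 1).
    by rewrite /psi /D /c E4 -natr1; ring.
  rewrite -subr_ge0 E.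
  by apply: addr_ge0; [apply: addr_ge0; [apply: addr_ge0; [apply: mulr_ge0|] | ] | apply: mulr_ge0]; rewrite ?/c; lra.
have p0 : psi 0%N = 0 by rewrite /psi /g Gs0; ring.
have pK : psi K = 0 by rewrite /psi /g Gs_out; [ring | by []].
have := @ler_sum_nat _ 0 K _ _ (fun j hj => step j (proj2 (andP hj))).
rewrite big_split /= sumr_const_nat telescope_sumr // p0 pK subr0 addr0 subn0.
by move=> H; apply: le_trans H; rewrite -[X in _ <= X]mulr_natl.
Qed.

Lemma dim23 (R : realType) n k : ((n = 4 * k + 2) \/ (n = 4 * k + 3))%N ->
  @is_frac_trunc_dim R n (k.+1)%:R.
Proof.
move=> hn; split; last by move=> h hf; exact: lower23 hn hf.
exists (fun v : 'I_n => (FW n v)%:R / 2%:R : R); split; first exact: FW_ok.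
rewrite fsumT_F.
have -> : (\sum_(0 <= v < n) FW n v = 2 * k.+1)%N.
  by case: hn => hn; [rewrite (FW_sum2 hn) | rewrite (FW_sum3 hn)]; lia.
rewrite natrM; by field.
Qed.

Lemma dim1 (R : realType) n k : (n = 4 * k + 5)%N ->
  @is_frac_trunc_dim R n (k%:R + 3 / 2).
Proof.
move=> hn; split; last by move=> h hf; exact: lower1 hn hf.
exists (fun v : 'I_n => (FW n v)%:R / 2%:R : R); split; first exact: FW_ok.
rewrite fsumT_F.
have -> : (\sum_(0 <= v < n) FW n v = 2 * k + 3)%N.
  by rewrite (@FW_sum1 n k.+1); lia.
rewrite natrD natrM; by field.
Qed.

Lemma dim0 (R : realType) K :
  @is_frac_trunc_dim R (4 * K) ((K%:R * (2 * K%:R + 2)) / (2 * K%:R + 1)).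
Proof.
split; last by move=> h hf; exact: lower0 hf.
exists (fun v : 'I_(4 * K) => (F0 K v)%:R / (2 * K + 1)%N%:R : R); split; first exact: F0_ok.
rewrite fsumT_F F0_sum.
rewrite (natrM R K) !(natrD R).
by congr (_ * _ / _); ring.
Qed.
Unset Implicit Arguments. Set Strict Implicit.
Theorem corollary3p12 (R : realType) (n : nat) (hn : (2 <= n)%N) :
  ((n \in [:: 2; 3]%N) -> @is_frac_trunc_dim R n 1) /\
  ((n \in [:: 4; 5]%N) ->
     @is_frac_trunc_dim R n ((8 - n%:R) / (7 - n%:R))) /\
  ((6 <= n)%N -> (n %% 4 = 1)%N ->
     @is_frac_trunc_dim R n ((n%:R + 1) / 4)) /\
  ((6 <= n)%N -> (n %% 4 = 2)%N \/ (n %% 4 = 3)%N ->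
     @is_frac_trunc_dim R n ((Num.ceil (n%:R / 4 : R))%:~R)) /\
  ((8 <= n)%N -> (n %% 4 = 0)%N ->
     exists d : R, @is_frac_trunc_dim R n d /\
       n%:R / 4 <= d <= (n%:R + 2) / 4).
Proof.
split; [|split; [|split; [|split]]].
- rewrite !inE => /orP[] /eqP ->.
    by have := @dim23 R 2 0 (or_introl erefl); rewrite mulr1n.
  by have := @dim23 R 3 0 (or_intror erefl); rewrite mulr1n.
- rewrite !inE => /orP[] /eqP ->.
    have := @dim0 R 1.
    have -> : ((1%:R * (2 * 1%:R + 2)) / (2 * 1%:R + 1) : R) = (8 - 4%:R) / (7 - 4%:R) by field.
    by [].
  have := @dim1 R 5 0 erefl.
  have -> : (0%:R + 3 / 2 : R) = (8 - 5%:R) / (7 - 5%:R) by field.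
  by [].
- move=> n6 n1.
  have hk : n = (4 * (n %/ 4).-1 + 5)%N by lia.
  have := dim1 R hk.
  have -> : ((n %/ 4).-1%:R + 3 / 2 : R) = (n%:R + 1) / 4.
    by rewrite [in RHS]hk natrD natrM; field.
  by [].
- move=> n6 n23.
  have hk : (n = 4 * (n %/ 4) + 2 \/ n = 4 * (n %/ 4) + 3)%N by lia.
  have := dim23 R hk.
  suff -> : Num.ceil (n%:R / 4 : R) = ((n %/ 4).+1)%:Z by [].
  apply: ceil_def.
  have -> : (((n %/ 4).+1)%:Z - 1 = (n %/ 4)%:Z)%R by lia.
  rewrite /=.
  have kk : (n %/ 4).+1%:R = (n %/ 4)%:R + 1 :> R by rewrite -natr1.
  rewrite -!pmulrn.
  set k := (n %/ 4)%N in hk kk *.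
  rewrite kk; case: hk => ->; rewrite natrD natrM; apply/andP; split; lra.
- move=> n8 n0.
  have [K hK] : exists K, n = (4 * K)%N by exists (n %/ 4)%N; lia.
  subst n.
  exists ((K%:R * (2 * K%:R + 2)) / (2 * K%:R + 1)); split; first exact: dim0.
  have K0 : 0 <= K%:R :> R by rewrite ler0n.
  have D0 : 0 < 2 * K%:R + 1 :> R by lra.
  rewrite natrM; apply/andP; split.
    by rewrite ler_pdivlMr //; nra.
  by rewrite ler_pdivrMr //; nra.
Qed.
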